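(* For any integers $a,a'>1$, if $\mathrm{L}_a\cap\mathrm{L}_{a'}\neq\emptyset$ then $a\in\mathrm{L}_{a'}$ or $a'\in\mathrm{L}_a$. Consequently, either $\mathrm{L}_a\cap\mathrm{L}_{a'}=\emptyset$, or $\mathrm{L}_a\subset\mathrm{L}_{a'}$, or $\mathrm{L}_a\supset\mathrm{L}_{a'}$.
   Context: For an integer $a>1$ let $P(a)$ be its largest prime factor and $\mathrm{L}_a=\{ba: b\in\mathbb{N},\ \text{every prime } p\mid b \text{ satisfies } p\ge P(a)\}$. *)

(* Defs.v *)
From mathcomp Require Import all_boot.
Set Implicit Arguments. Unset Strict Implicit. Unset Printing Implicit Defensive.

Definition P (a : nat) : nat := max_pdiv a.

Definition L (a : nat) (n : nat) : Prop :=
  exists b : nat, 0 < b /\ n = b * a /\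
    (forall p : nat, prime p -> p %| b -> P a <= p).

(* Main.v *)
Require Import Defs.
From mathcomp Require Import all_boot.
From mathcomp Require Import zify.
From Stdlib Require Classical_Prop.

Lemma coprime_nop m n : 0 < m -> 0 < n ->
  (forall q, prime q -> q %| m -> q %| n -> False) -> coprime m n.
Proof.
move=> m0 n0 H; rewrite coprime_has_primes //; apply/hasPn => q.
rewrite !mem_primes m0 n0 /= => /andP[pq qn]; apply/negP => /andP[_ qm].
exact: (H q pq qm qn).
Qed.

Lemma key a a' b b' : 1 < a -> 0 < a' -> 0 < b' -> a * b = a' * b' ->
  (forall p, prime p -> p %| b -> P a <= p) ->
  (forall p, prime p -> p %| b' -> P a' <= p) ->
  P a <= P a' -> logn (P a) a <= logn (P a) a' -> L a a'.
Proof.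
move=> ha ha' hb' E Hb Hb' Hle Hlog.
set p := P a.
have pp : prime p by apply: max_pdiv_prime.
have a0 : 0 < a by lia.
set u := a`_(p^').
have u0 : 0 < u by rewrite part_gt0.
have cu : coprime u b'.
  apply: coprime_nop => // q pq qu qb.
  have qa : q %| a by apply: dvdn_trans qu (dvdn_part _ _).
  have q1 : q <= p by apply: max_pdiv_max; rewrite mem_primes pq a0 qa.
  have q2 : P a' <= q by apply: Hb'.
  have qp : q = p by lia.
  have : p^'.-nat u by apply: part_pnat.
  move/pnatP => /(_ u0 q pq qu); rewrite qp !inE eqxx //.
have ua' : u %| a'.
  rewrite -(Gauss_dvdl _ cu) -E; apply: dvdn_mulr; exact: dvdn_part.
have pa' : a`_p %| a'.
  by rewrite p_part pfactor_dvdn.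
have aa' : a %| a'.
  rewrite -(partnC p a0) Gauss_dvd //; first by rewrite pa' ua'.
  exact: coprime_partC.
exists (a' %/ a); split; first by rewrite divn_gt0 // dvdn_leq.
split; first by rewrite divnK.
move=> q pq qc; apply: Hb => //.
have Eb : b = a' %/ a * b'.
  have K := divnK aa'; apply/eqP; rewrite -(eqn_pmul2l a0) mulnA (mulnC a (a' %/ a)) K E //.
by rewrite Eb dvdn_mulr.
Qed.

Lemma Pdvd a a' : 1 < a -> 0 < a' -> a %| a' -> P a <= P a'.
Proof.
move=> ha ha' d; apply: max_pdiv_max.
rewrite mem_primes max_pdiv_prime // ha' /=.
exact: dvdn_trans (max_pdiv_dvd a) d.
Qed.

Lemma trans a a' n : 1 < a -> L a a' -> L a' n -> L a n.
Proof.
move=> ha [c [c0 [-> Hc]]] [b [b0 [-> Hb]]].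
have hca : 0 < c * a by rewrite muln_gt0 c0; lia.
have Pl : P a <= P (c * a) by apply: Pdvd => //; apply: dvdn_mull.
exists (b * c); split; first by rewrite muln_gt0 b0 c0.
split; first by rewrite mulnA.
move=> q pq; rewrite Euclid_dvdM // => /orP[qb|qc].
  by apply: leq_trans Pl (Hb q pq qb).
exact: Hc.
Qed.

Lemma part1 a a' b b' : 1 < a -> 1 < a' -> 0 < b -> 0 < b' -> a * b = a' * b' ->
  (forall p, prime p -> p %| b -> P a <= p) ->
  (forall p, prime p -> p %| b' -> P a' <= p) ->
  P a <= P a' -> L a' a \/ L a a'.
Proof.
move=> ha ha' hb hb' E Hb Hb' Hle.
have [Hl|Hl] := leqP (logn (P a) a) (logn (P a) a').
  by right; apply: (@key a a' b b' ha _ hb' E Hb Hb' Hle Hl); lia.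
have [Heq|Hlt] := eqVneq (P a) (P a').
  left; apply: (@key a' a b' b ha' _ hb (esym E) Hb' Hb); first lia.
  - by rewrite Heq.
  - rewrite -Heq; lia.
exfalso.
have pp : prime (P a) by apply: max_pdiv_prime.
have nd : ~~ (P a %| b').
  apply/negP => d; have := Hb' _ pp d; lia.
have : logn (P a) (a * b) = logn (P a) (a' * b') by rewrite E.
rewrite !lognM //; try lia.
rewrite (@logn_coprime (P a) b') ?prime_coprime //.
lia.
Qed.

Theorem lemma2p1 (a a' : nat) (ha : 1 < a) (ha' : 1 < a') :
  ((exists n, L a n /\ L a' n) -> L a' a \/ L a a') /\
  ((forall n, ~ (L a n /\ L a' n)) \/
   (forall n, L a n -> L a' n) \/
   (forall n, L a' n -> L a n)).
Proof.
have P1 : (exists n, L a n /\ L a' n) -> L a' a \/ L a a'.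
  move=> [n [[b [b0 [-> Hb]]] [b' [b0' [E Hb']]]]].
  have [Hle|Hlt] := leqP (P a) (P a').
    apply: (@part1 a a' b b' ha ha' b0 b0' _ Hb Hb' Hle); lia.
  have := @part1 a' a b' b ha' ha b0' b0 _ Hb' Hb (ltnW Hlt).
  move=> H; have [||] := H; [lia|by right|by left].
split => //.
have [ex|nex] := Classical_Prop.classic (exists n, L a n /\ L a' n).
  case: (P1 ex) => H; right; [left|right] => n Hn.
    exact: (@trans a' a n ha' H Hn).
  exact: (@trans a a' n ha H Hn).
by left => n Hn; apply: nex; exists n.
Qed.
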